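(* For every positive integer $N$ there exists a real symmetric nonnegative matrix $A$ of rank $3$ having exactly one negative eigenvalue (counted with multiplicity) whose nonnegative rank exceeds $N$.
   Context: The nonnegative rank of an $m\times n$ matrix $A$ with nonnegative real entries is the smallest integer $r$ such that $A=UV$ for some $m\times r$ matrix $U$ and $r\times n$ matrix $V$, both with nonnegative real entries. *)

(* Defs.v *)
From HB Require Import structures.
From mathcomp Require Import all_boot all_order all_algebra.
From mathcomp Require Import reals.
Set Implicit Arguments. Unset Strict Implicit. Unset Printing Implicit Defensive.
Import Order.TTheory GRing.Theory Num.Theory.
Local Open Scope ring_scope.

Definition nonneg_mx (R : realType) (m n : nat) (A : 'M[R]_(m, n)) : Prop :=
  forall i j, 0 <= A i j.

Definition nonneg_factorization (R : realType) (m n r : nat)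
    (A : 'M[R]_(m, n)) : Prop :=
  exists (U : 'M[R]_(m, r)) (V : 'M[R]_(r, n)),
    nonneg_mx U /\ nonneg_mx V /\ A = U *m V.

Definition eigenvalue_multiset (R : realType) (n : nat) (A : 'M[R]_n)
    (s : seq R) : Prop :=
  char_poly A = \prod_(x <- s) ('X - x%:P).

Definition num_neg_eigenvalues (R : realType) (n : nat) (A : 'M[R]_n)
    (k : nat) : Prop :=
  exists s : seq R, eigenvalue_multiset A s /\ count (fun x => x < 0) s = k.

(* Main.v *)
From HB Require Import structures.
From mathcomp Require Import all_boot all_order all_algebra.
From mathcomp Require Import reals ring lra.
Require Import Defs.
Import Order.TTheory GRing.Theory Num.Theory.
Local Open Scope ring_scope.

Lemma char_poly_mulmxC (R : comNzRingType) (p q : nat) (B : 'M[R]_(p, q)) (C : 'M[R]_(q, p)) :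
  'X^q * char_poly (B *m C) = 'X^p * char_poly (C *m B).
Proof.
set Bp := map_mx (@polyC R) B; set Cp := map_mx (@polyC R) C.
pose M1 := block_mx ('X%:M : 'M_p) Bp Cp (1%:M : 'M_q).
pose L1 := block_mx (1%:M : 'M_p) (- Bp) 0 ('X%:M : 'M_q).
pose L2 := block_mx (1%:M : 'M_p) 0 (- Cp) ('X%:M : 'M_q).
have e1 : L1 *m M1 = block_mx (char_poly_mx (B *m C)) 0 ('X *: Cp) ('X%:M).
  rewrite mulmx_block !mul1mx !mul0mx !add0r !mulmx1 mulNmx subrr mul_scalar_mx.
  by rewrite /char_poly_mx map_mxM.
have e2 : L2 *m M1 = block_mx ('X%:M) Bp 0 (char_poly_mx (C *m B)).
  rewrite mulmx_block !mul1mx !mul0mx !addr0 !mulmx1 !mulNmx mul_mx_scalar mul_scalar_mx addNr.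
  by rewrite /char_poly_mx map_mxM addrC.
have d1 := congr1 determinant e1; have d2 := congr1 determinant e2.
rewrite det_mulmx det_ublock det_lblock det1 det_scalar mul1r in d1.
rewrite det_mulmx det_lblock det_ublock det1 det_scalar mul1r in d2.
rewrite det_scalar in d2. by rewrite /char_poly -d2 d1 mulrC.
Qed.

Lemma nnrank_bound (R : realType) (n r : nat) (A : 'M[R]_n) :
  nonneg_factorization r A ->
  (forall j1 j2, (forall i, A i j1 = 0 -> A i j2 = 0) -> j1 = j2) ->
  (n <= 2 ^ r)%N.
Proof.
move=> [U [V [U0 [V0 ->]]]] Hinj.
pose T (j : 'I_n) : {set 'I_r} := [set k | 0 < V k j].
have key : forall j1 j2 i, T j1 = T j2 -> (U *m V) i j1 = 0 -> (U *m V) i j2 = 0.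
  move=> j1 j2 i eT; rewrite !mxE => /psumr_eq0P H.
  apply: big1 => k _.
  have [->|nz] := eqVneq (V k j2) 0; first by rewrite mulr0.
  have pos : 0 < V k j2 by rewrite lt0r nz V0.
  have : k \in T j1 by rewrite eT inE.
  rewrite inE => pos1.
  have := H (fun k _ => mulr_ge0 (U0 _ _) (V0 _ _)) k isT; move/eqP; rewrite mulf_eq0 => /orP [/eqP->|]; first by rewrite mul0r.
  by rewrite (gt_eqF pos1).
have Tinj : injective T by move=> j1 j2 e; apply: Hinj => i; apply: key.
have := leq_card T Tinj.
by rewrite card_ord -cardsT -powersetT card_powerset cardsT card_ord.
Qed.

Section Constr.
Variable R : realType.
Variable m' : nat.
Local Notation m := m'.+2.
Local Notation n := (m + m)%N.

Definition xv (i : 'I_n) : R :=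
  match split i with inl k => (k.+1)%:R | inr k => - (k.+1)%:R end.

Definition Amx : 'M[R]_n := \matrix_(i, j) (xv i + xv j) ^+ 2.

Lemma xv_odd (g : R -> R) : (forall y, g (- y) = - g y) -> \sum_i g (xv i) = 0.
Proof.
move=> go; rewrite big_split_ord /=.
have hl : forall k : 'I_m, split (lshift m k) = inl k := fun k => unsplitK (inl k).
have hr : forall k : 'I_m, split (rshift m k) = inr k := fun k => unsplitK (inr k).
rewrite /xv; under [X in _ + X]eq_bigr do rewrite hr go.
under eq_bigr do rewrite hl.
by rewrite sumrN subrr.
Qed.

Lemma xv_inj : injective xv.
Proof.
move=> i j; rewrite /xv -{2}(splitK i) -{2}(splitK j).
case: (split i) => [k|k]; case: (split j) => [l|l] /=.
- by move/eqP; rewrite eqr_nat eqSS => /eqP/val_inj ->.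
- move=> h; exfalso; have := ltr0Sn R k; have := ltr0Sn R l; lra.
- move=> h; exfalso; have := ltr0Sn R k; have := ltr0Sn R l; lra.
- by move/oppr_inj/eqP; rewrite eqr_nat eqSS => /eqP/val_inj ->.
Qed.


Definition nR : R := n%:R.
Definition s4 : R := \sum_i xv i ^+ 4.
Definition bb : R := Num.sqrt (nR * s4).
Definition phi (k : 'I_3) (y : R) : R :=
  match val k with 0 => bb + nR * y ^+ 2 | 1 => y | _ => bb - nR * y ^+ 2 end.
Definition dd (k : 'I_3) : R :=
  match val k with 0 => (2 * nR * bb)^-1 | 1 => 2 | _ => - (2 * nR * bb)^-1 end.
Definition Bm : 'M[R]_(n, 3) := \matrix_(i, k) phi k (xv i).
Definition Cm : 'M[R]_(3, n) := \matrix_(k, i) (dd k * phi k (xv i)).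

Lemma nR_gt0 : 0 < nR.
Proof. by rewrite /nR ltr0n addn_gt0. Qed.

Definition i0 : 'I_n := lshift m ord0.
Definition i1 : 'I_n := rshift m ord0.
Definition i2 : 'I_n := lshift m (Ordinal (isT : (1 < m)%N)).

Lemma xv_i0 : xv i0 = 1.
Proof. by rewrite /xv /i0 (unsplitK (inl _)). Qed.
Lemma xv_i1 : xv i1 = -1.
Proof. by rewrite /xv /i1 (unsplitK (inr _)). Qed.
Lemma xv_i2 : xv i2 = 2.
Proof. by rewrite /xv /i2 (unsplitK (inl _)). Qed.

Lemma s4_gt0 : 0 < s4.
Proof.
have ge : forall i, 0 <= xv i ^+ 4 by move=> i; rewrite (_ : 4 = 2 * 2)%N // exprM sqr_ge0.
rewrite lt0r sumr_ge0 ?andbT; last by move=> i _; apply: ge.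
apply/eqP => /psumr_eq0P H.
have := H (fun i _ => ge i) i0 isT; rewrite xv_i0 expr1n => /eqP; by rewrite oner_eq0.
Qed.

Lemma bb_gt0 : 0 < bb.
Proof. by rewrite /bb sqrtr_gt0 mulr_gt0 ?nR_gt0 ?s4_gt0. Qed.

Lemma bb2 : bb ^+ 2 = nR * s4.
Proof. by rewrite /bb sqr_sqrtr // mulr_ge0 ?ltW ?nR_gt0 ?s4_gt0. Qed.

Lemma Amx_fact : Amx = Bm *m Cm.
Proof.
apply/matrixP => i j; rewrite !mxE !big_ord_recl big_ord0 !mxE /=.
rewrite /phi /dd /=.
have := nR_gt0; have := bb_gt0.
set a := nR; set b := bb; set y := xv i; set z := xv j => hb ha.
field.
apply/andP; split; first by rewrite gt_eqF.
apply/eqP; have := ler0n R m'; lra.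
Qed.


Definition CB := Cm *m Bm.

Lemma CBE k l : CB k l = \sum_i dd k * phi k (xv i) * phi l (xv i).
Proof. by rewrite /CB !mxE; apply: eq_bigr => i _; rewrite !mxE. Qed.

Lemma CB_trig : is_trig_mx CB.
Proof.
apply/is_trig_mxP => k l; rewrite CBE.
case: k => [[|[|[|?]]] hk] //; case: l => [[|[|[|?]]] hl] // _.
- apply: (xv_odd (fun y => dd _ * phi _ y * phi (Ordinal hl) y)).
  by move=> y; rewrite /phi /dd /=; ring.
- rewrite (eq_bigr (fun i => dd (Ordinal hk) * bb ^+ 2 - dd (Ordinal hk) * nR ^+ 2 * xv i ^+ 4)); last first.
    by move=> i _; rewrite /phi /dd /=; ring.
  rewrite sumrB sumr_const card_ord -mulr_sumr bb2 -/s4 -mulr_natr -/nR.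
  ring.
- apply: (xv_odd (fun y => dd (Ordinal hk) * phi (Ordinal hk) y * phi (Ordinal hl) y)).
  by move=> y; rewrite /phi /dd /=; ring.
Qed.


Definition o0 : 'I_3 := ord0.
Definition o1 : 'I_3 := Ordinal (isT : (1 < 3)%N).
Definition o2 : 'I_3 := Ordinal (isT : (2 < 3)%N).

Lemma c_gt0 : 0 < (2 * nR * bb)^-1.
Proof. by rewrite invr_gt0 !mulr_gt0 ?nR_gt0 ?bb_gt0. Qed.

Lemma CB0 : 0 <= CB o0 o0.
Proof.
rewrite CBE sumr_ge0 // => i _; rewrite /dd /phi /= -mulrA mulr_ge0 //.
  exact: ltW c_gt0.
by rewrite -expr2 sqr_ge0.
Qed.

Lemma CB1 : 0 <= CB o1 o1.
Proof.
rewrite CBE sumr_ge0 // => i _; rewrite /dd /phi /= -mulrA mulr_ge0 //.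
by rewrite -expr2 sqr_ge0.
Qed.

Lemma CB2 : CB o2 o2 < 0.
Proof.
rewrite CBE (eq_bigr (fun i => - ((2 * nR * bb)^-1 * (bb - nR * xv i ^+ 2) ^+ 2))); last first.
  by move=> i _; rewrite /dd /phi /=; ring.
rewrite sumrN -mulr_sumr oppr_lt0 mulr_gt0 ?c_gt0 //.
have ge : forall i, 0 <= (bb - nR * xv i ^+ 2) ^+ 2 by move=> i; apply: sqr_ge0.
rewrite lt0r sumr_ge0 ?andbT; last by move=> i _; apply: ge.
apply/eqP => /psumr_eq0P H.
have := H (fun i _ => ge i) i0 isT; have := H (fun i _ => ge i) i2 isT.
rewrite xv_i0 xv_i2 => /eqP; rewrite sqrf_eq0 => /eqP e2 /eqP; rewrite sqrf_eq0 => /eqP e0.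
have := nR_gt0; lra.
Qed.


Lemma prod_nseq0 (k : nat) : \prod_(y <- nseq k (0:R)) ('X - y%:P) = 'X^k.
Proof.
elim: k => [|k IH]; first by rewrite big_nil expr0.
by rewrite /= big_cons IH subr0 exprS.
Qed.

Lemma char_Amx : char_poly Amx =
  \prod_(y <- [:: CB o0 o0; CB o1 o1; CB o2 o2] ++ nseq (n - 3) 0) ('X - y%:P).
Proof.
have e := @char_poly_mulmxC R n 3 Bm Cm.
rewrite -Amx_fact -/CB (char_poly_trig CB_trig) in e.
rewrite big_cat /= prod_nseq0 !big_cons big_nil mulr1.
have P3 : \prod_(i < 3) ('X - (CB i i)%:P) =
   ('X - (CB o0 o0)%:P) * ('X - (CB o1 o1)%:P) * ('X - (CB o2 o2)%:P).
  rewrite !big_ord_recl big_ord0 mulr1 mulrA.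
  have -> : lift ord0 ord0 = o1 :> 'I_3 by apply/val_inj.
  by have -> : lift ord0 (lift ord0 ord0) = o2 :> 'I_3 by apply/val_inj.
rewrite P3 in e.
apply: (mulfI (x := 'X^3)); first by rewrite expf_neq0 // polyX_eq0.
rewrite e.
have h3 : (3 <= n)%N by rewrite !addSn !ltnS addnS.
have -> : 'X^n = 'X^3 * 'X^(n - 3) :> {poly R} by rewrite -exprD subnKC.
ring.
Qed.


Definition fsub (k : 'I_3) : 'I_n := match val k with 0 => i0 | 1 => i1 | _ => i2 end.
Definition Smx : 'M[R]_3 := rowsub fsub (colsub fsub Amx).

Lemma det_Smx : \det Smx != 0.
Proof.
rewrite (expand_det_row _ ord0) !big_ord_recl big_ord0 /cofactor.
rewrite !(expand_det_row _ ord0) !big_ord_recl !big_ord0 /cofactor !det_mx11.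
rewrite !mxE /= /fsub /= !xv_i0 !xv_i1 !xv_i2 /bump /=.
apply/eqP => h; suff : (-72 : R) = 0 by lra.
rewrite -h; ring.
Qed.

Lemma rank_Amx : \rank Amx = 3%N.
Proof.
apply/eqP; rewrite eqn_leq; apply/andP; split.
  rewrite Amx_fact; exact: leq_trans (mxrankM_maxl Bm Cm) (rank_leq_col Bm).
have -> : 3%N = \rank Smx by rewrite mxrank_unit // unitmxE unitfE det_Smx.
have trE : (colsub fsub Amx)^T = rowsub fsub Amx^T by apply/matrixP => i j; rewrite !mxE.
apply: leq_trans (mxrankS (rowsub_sub _ _)) _.
by have := mxrankS (rowsub_sub fsub Amx^T); rewrite -trE !mxrank_tr.
Qed.


Lemma xv_opp (j : 'I_n) : exists i, xv i = - xv j.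
Proof.
rewrite /xv; case: (split j) => k.
  by exists (rshift m k); rewrite (unsplitK (inr k)).
by exists (lshift m k); rewrite (unsplitK (inl k)) opprK.
Qed.

Lemma Amx_pattern (j1 j2 : 'I_n) :
  (forall i, Amx i j1 = 0 -> Amx i j2 = 0) -> j1 = j2.
Proof.
move=> H; have [i hi] := xv_opp j1.
have := H i; rewrite !mxE hi addNr expr0n /= => /(_ erefl) /eqP.
rewrite sqrf_eq0 addrC subr_eq0 => /eqP e; exact: xv_inj (esym e).
Qed.

End Constr.

Theorem mainTheorem1 (R : realType) (N : nat) (hN : (0 < N)%N) :
  exists (n : nat) (A : 'M[R]_n),
    A^T = A /\ nonneg_mx A /\ \rank A = 3%N /\
    num_neg_eigenvalues A 1 /\
    (forall r : nat, (r <= N)%N -> ~ nonneg_factorization r A).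
Proof.
set m' := (2 ^ N - 2)%N.
have h2 : (2 <= 2 ^ N)%N by have := leq_pexp2l (isT : (0 < 2)%N) hN; rewrite expn1.
have hm : m'.+2 = (2 ^ N)%N by rewrite /m' -addn2 subnK.
exists (m'.+2 + m'.+2)%N, (Amx R m').
split; first by apply/matrixP => i j; rewrite !mxE addrC.
split; first by move=> i j; rewrite mxE sqr_ge0.
split; first exact: rank_Amx.
split.
  exists ([:: CB R m' (o0) (o0); CB R m' o1 o1; CB R m' o2 o2] ++ nseq (m'.+2 + m'.+2 - 3) 0).
  split; first exact: char_Amx.
  rewrite count_cat count_nseq ltxx mul0n addn0 /=.
  by rewrite ltNge CB0 ltNge CB1 CB2.
move=> r hr hf.
have := @nnrank_bound R _ r _ hf (@Amx_pattern R m').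
rewrite hm => h.
have := leq_trans h (leq_pexp2l (isT : (0 < 2)%N) hr).
by rewrite -[X in (_ <= X)%N]addn0 leq_add2l leqn0 expn_eq0.
Qed.
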